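(* Let $T$ be a completely non-unitary contraction on $H$. Then, in the strong symplectic Hilbert space $\mathbb{H}=H\oplus_\perp H$, $$A_T^{\perp_s}=A_T\oplus_\perp Q\oplus_\perp Q_*,$$ where the direct sum is orthogonal with respect to the Hilbert space inner product of $\mathbb{H}$.
   Context: $H$ is an infinite-dimensional separable complex Hilbert space with inner product $(\cdot,\cdot)_H$. A contraction is $T\in\mathbb{B}(H)$ with $\|T\|\le1$; it is completely non-unitary (c.n.u.) if there is no nonzero invariant subspace $\mathcal{K}$ with $T|_{\mathcal{K}}$ unitary. Put $\mathbb{K}=\ker(I-T^*T)$, $\mathbb{K}_*=\ker(I-TT^* )$. Let $\mathbb{H}=H\oplus_\perp H$ with strong symplectic structure $[(x_1,x_2),(y_1,y_2)]=i(x_1,y_1)_H-i(x_2,y_2)_H$, and for $S\subseteq\mathbb{H}$ let $S^{\perp_s}=\{a\in\mathbb{H}:[a,b]=0\ \forall b\in S\}$. Let $A_T=\{(x,Tx):x\in\mathbb{K}\}$, $Q=\{(x,0):x\in\mathbb{K}^\perp\}$ and $Q_*=\{(0,x):x\in\mathbb{K}_*^\perp\}$. *)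

(* Defs.v *)
From HB Require Import structures.
From mathcomp Require Import all_boot all_order all_algebra.
From mathcomp Require Import complex.
From mathcomp Require Import all_classical all_reals.
Set Implicit Arguments. Unset Strict Implicit. Unset Printing Implicit Defensive.
Import Order.TTheory GRing.Theory Num.Theory.
Local Open Scope ring_scope.
Local Open Scope classical_set_scope.

Section Hilbert.
Variables (R : realType) (V : lmodType R[i]) (ip : V -> V -> R[i]).

Definition hnorm (x : V) : R := Num.sqrt (complex.Re (ip x x)).

Definition inner_product_axioms : Prop :=
  [/\ (forall (a : R[i]) x y z, ip (a *: x + y) z = a * ip x z + ip y z),
      (forall x y, ip y x = (ip x y)^*%C),
      (forall x, complex.Im (ip x x) = 0 /\ 0 <= complex.Re (ip x x)) &
      (forall x, ip x x = 0 -> x = 0)].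

Definition hcauchy (u : nat -> V) : Prop :=
  forall e : R, 0 < e -> exists N : nat, forall m n, (N <= m)%N -> (N <= n)%N ->
    hnorm (u m - u n) < e.

Definition hconverges (u : nat -> V) (l : V) : Prop :=
  forall e : R, 0 < e -> exists N : nat, forall n, (N <= n)%N -> hnorm (u n - l) < e.

Definition hcomplete : Prop := forall u, hcauchy u -> exists l, hconverges u l.

Definition hseparable : Prop :=
  exists d : nat -> V, forall x (e : R), 0 < e -> exists n, hnorm (x - d n) < e.

Definition hinfinite_dim : Prop :=
  forall n : nat, exists s : 'I_n -> V,
    forall c : 'I_n -> R[i], \sum_(k < n) c k *: s k = 0 -> forall k, c k = 0.

Definition is_inf_sep_hilbert : Prop :=
  [/\ inner_product_axioms, hcomplete, hseparable & hinfinite_dim].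

Definition bounded_linear (T : V -> V) : Prop :=
  (forall (a : R[i]) x y, T (a *: x + y) = a *: T x + T y) /\
  exists M : R, forall x, hnorm (T x) <= M * hnorm x.

Definition is_adjoint (T Ts : V -> V) : Prop := forall x y, ip (T x) y = ip x (Ts y).

Definition contraction (T : V -> V) : Prop :=
  bounded_linear T /\ forall x, hnorm (T x) <= hnorm x.

Definition hclosed (S : set V) : Prop :=
  forall u l, (forall n, S (u n)) -> hconverges u l -> S l.

Definition closed_subspace (S : set V) : Prop :=
  [/\ S 0, (forall (a : R[i]) x y, S x -> S y -> S (a *: x + y)) & hclosed S].

(* completely non-unitary: no nonzero (closed) invariant subspace on which
   T restricts to a unitary operator (isometric and onto the subspace) *)
Definition cnu (T : V -> V) : Prop :=
  forall S : set V, closed_subspace S ->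
    (forall x, S x -> S (T x)) ->
    (forall x, S x -> hnorm (T x) = hnorm x) ->
    (forall y, S y -> exists2 x, S x & T x = y) ->
    forall x, S x -> x = 0.

Definition defK (T Ts : V -> V) : set V := [set x | x - Ts (T x) = 0].
Definition defKs (T Ts : V -> V) : set V := [set x | x - T (Ts x) = 0].

Definition orthocompl (S : set V) : set V := [set x | forall y, S y -> ip x y = 0].

Definition ip2 (a b : V * V) : R[i] := ip a.1 b.1 + ip a.2 b.2.

Definition sform (a b : V * V) : R[i] := 'i * ip a.1 b.1 - 'i * ip a.2 b.2.

Definition sperp (S : set (V * V)) : set (V * V) :=
  [set a | forall b, S b -> sform a b = 0].

Definition A_T (T Ts : V -> V) : set (V * V) :=
  [set p | exists2 x, defK T Ts x & p = (x, T x)].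
Definition Q_ (T Ts : V -> V) : set (V * V) :=
  [set p | exists2 x, orthocompl (defK T Ts) x & p = (x, 0)].
Definition Qs_ (T Ts : V -> V) : set (V * V) :=
  [set p | exists2 x, orthocompl (defKs T Ts) x & p = (0, x)].

Definition orth2 (S1 S2 : set (V * V)) : Prop :=
  forall a b, S1 a -> S2 b -> ip2 a b = 0.

Definition sum3 (S1 S2 S3 : set (V * V)) : set (V * V) :=
  [set p | exists a b c, [/\ S1 a, S2 b, S3 c &
     p = (a.1 + b.1 + c.1, a.2 + b.2 + c.2)]].

Definition orth_dsum3 (S S1 S2 S3 : set (V * V)) : Prop :=
  [/\ S = sum3 S1 S2 S3, orth2 S1 S2, orth2 S1 S3 & orth2 S2 S3].

End Hilbert.

(* Main.v *)
Require Import Defs.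
From HB Require Import structures.
From mathcomp Require Import all_boot all_order all_algebra.
From mathcomp Require Import complex.
From mathcomp Require Import all_classical all_reals.
From mathcomp Require Import ring lra.
Set Implicit Arguments. Unset Strict Implicit. Unset Printing Implicit Defensive.
Import Order.TTheory GRing.Theory Num.Theory.
Local Open Scope ring_scope.
Local Open Scope classical_set_scope.
Local Open Scope complex_scope.

Definition NN (R : realType) (V : lmodType R[i]) (ip : V -> V -> R[i]) (x : V) : R :=
  complex.Re (ip x x).

Lemma ip0l (R : realType) (V : lmodType R[i]) (ip : V -> V -> R[i])
  (ax : inner_product_axioms ip) (z : V) : ip 0 z = 0.
Proof.
case: ax => lin _ _ _.
have h := lin 1 0 0 z; rewrite scale1r addr0 mul1r in h.
apply: (@addrI _ (ip 0 z)); by rewrite addr0.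
Qed.

Lemma ipD1 (R : realType) (V : lmodType R[i]) (ip : V -> V -> R[i])
  (ax : inner_product_axioms ip) (x y z : V) : ip (x + y) z = ip x z + ip y z.
Proof. by case: ax => lin _ _ _; rewrite -{1}(scale1r x) lin mul1r. Qed.

Lemma ipZ1 (R : realType) (V : lmodType R[i]) (ip : V -> V -> R[i])
  (ax : inner_product_axioms ip) (a : R[i]) (x z : V) : ip (a *: x) z = a * ip x z.
Proof.
have h0 := ip0l ax z.
by case: ax => lin _ _ _; rewrite -(addr0 (a *: x)) lin h0 addr0.
Qed.

Lemma ipN1 (R : realType) (V : lmodType R[i]) (ip : V -> V -> R[i])
  (ax : inner_product_axioms ip) (x z : V) : ip (- x) z = - ip x z.
Proof. by rewrite -scaleN1r (ipZ1 ax) mulN1r. Qed.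

Lemma ipB1 (R : realType) (V : lmodType R[i]) (ip : V -> V -> R[i])
  (ax : inner_product_axioms ip) (x y z : V) : ip (x - y) z = ip x z - ip y z.
Proof. by rewrite (ipD1 ax) (ipN1 ax). Qed.

Lemma ipC (R : realType) (V : lmodType R[i]) (ip : V -> V -> R[i])
  (ax : inner_product_axioms ip) (x y : V) : ip y x = (ip x y)^*%C.
Proof. by case: ax => _ c _ _; rewrite c. Qed.

Lemma conjD (R : realType) (a b : R[i]) : (a + b)^*%C = (a^*%C + b^*%C).
Proof. case: a => a1 a2; case: b => b1 b2 /=. by rewrite /= opprD. Qed.

Lemma conjM (R : realType) (a b : R[i]) : (a * b)^*%C = (a^*%C * b^*%C).
Proof. case: a => a1 a2; case: b => b1 b2. apply/eqP; rewrite eq_complex /=. apply/andP; split; apply/eqP; ring. Qed.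

Lemma conjK (R : realType) (a : R[i]) : (a^*%C)^*%C = a.
Proof. by case: a => a1 a2 /=; rewrite opprK. Qed.

Lemma ip0r (R : realType) (V : lmodType R[i]) (ip : V -> V -> R[i])
  (ax : inner_product_axioms ip) (z : V) : ip z 0 = 0.
Proof. by rewrite (ipC ax) (ip0l ax) /= oppr0. Qed.

Lemma ipD2 (R : realType) (V : lmodType R[i]) (ip : V -> V -> R[i])
  (ax : inner_product_axioms ip) (x y z : V) : ip x (y + z) = ip x y + ip x z.
Proof. by rewrite (ipC ax) (ipD1 ax) conjD -!(ipC ax). Qed.

Lemma ipZ2 (R : realType) (V : lmodType R[i]) (ip : V -> V -> R[i])
  (ax : inner_product_axioms ip) (a : R[i]) (x z : V) : ip x (a *: z) = a^*%C * ip x z.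
Proof. by rewrite (ipC ax) (ipZ1 ax) conjM -(ipC ax). Qed.

Lemma ipN2 (R : realType) (V : lmodType R[i]) (ip : V -> V -> R[i])
  (ax : inner_product_axioms ip) (x z : V) : ip x (- z) = - ip x z.
Proof. by rewrite (ipC ax (-z) x) (ipN1 ax) (ipC ax z x); case: (ip z x) => a b /=. Qed.

Lemma ipB2 (R : realType) (V : lmodType R[i]) (ip : V -> V -> R[i])
  (ax : inner_product_axioms ip) (x y z : V) : ip x (y - z) = ip x y - ip x z.
Proof. by rewrite (ipD2 ax) (ipN2 ax). Qed.

Lemma ipxx (R : realType) (V : lmodType R[i]) (ip : V -> V -> R[i])
  (ax : inner_product_axioms ip) (x : V) : ip x x = (NN ip x)%:C.
Proof.
case: ax => _ _ p _; have [h _] := p x; rewrite /NN.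
by case: (ip x x) h => a b /= ->.
Qed.

Lemma NN_ge0 (R : realType) (V : lmodType R[i]) (ip : V -> V -> R[i])
  (ax : inner_product_axioms ip) (x : V) : 0 <= NN ip x.
Proof. by case: ax => _ _ p _; have [_ h] := p x. Qed.

Lemma NN_eq0 (R : realType) (V : lmodType R[i]) (ip : V -> V -> R[i])
  (ax : inner_product_axioms ip) (x : V) : NN ip x = 0 -> x = 0.
Proof.
move=> h; have e := ipxx ax x; rewrite h in e.
by case: ax => _ _ _ d; apply: d; rewrite e.
Qed.

Lemma NN_exp (R : realType) (V : lmodType R[i]) (ip : V -> V -> R[i])
  (ax : inner_product_axioms ip) (x y : V) (l : R) :
  NN ip (x + l%:C *: y) = NN ip x + 2 * l * complex.Re (ip x y) + l ^+ 2 * NN ip y.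
Proof.
rewrite {1}/NN (ipD1 ax) !(ipD2 ax) !(ipZ1 ax) !(ipZ2 ax) (ipC ax x y) !(ipxx ax).
move: (NN ip x) (NN ip y) => a b.
case: (ip x y) => c d /=. ring.
Qed.

Lemma quad (R : realType) (a b c : R) : 0 <= c ->
  (forall l : R, 0 <= a + 2 * l * b + l ^+ 2 * c) -> b ^+ 2 <= a * c.
Proof.
move=> c0 h; have [cz|cp] := eqVneq c 0.
  rewrite cz mulr0.
  have [bz|bn] := eqVneq b 0; first by rewrite bz expr2 mulr0 lexx.
  pose t := (a + 1) / (2 * b).
  have ht : t * (2 * b) = a + 1.
    by rewrite /t mulfVK //; apply: mulf_neq0 => //; rewrite pnatr_eq0.
  have := h (- t); rewrite cz mulr0 addr0 => h1.
  exfalso; nra.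
have cpos : 0 < c by rewrite lt_def cp c0.
pose t := b / c.
have ht : t * c = b by rewrite /t mulfVK.
have := h (- t) => h1.
nra.
Qed.

Lemma CS2 (R : realType) (V : lmodType R[i]) (ip : V -> V -> R[i])
  (ax : inner_product_axioms ip) (x y : V) :
  complex.Re (ip x y) ^+ 2 <= NN ip x * NN ip y.
Proof.
apply: quad; first exact: NN_ge0.
by move=> l; rewrite -(NN_exp ax); apply: NN_ge0.
Qed.

Lemma hn_ge0 (R : realType) (V : lmodType R[i]) (ip : V -> V -> R[i]) (x : V) :
  0 <= hnorm ip x.
Proof. exact: sqrtr_ge0. Qed.

Lemma hn_sq (R : realType) (V : lmodType R[i]) (ip : V -> V -> R[i])
  (ax : inner_product_axioms ip) (x : V) : hnorm ip x ^+ 2 = NN ip x.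
Proof. by rewrite /hnorm sqr_sqrtr //; apply: (NN_ge0 ax). Qed.

Lemma CSabs (R : realType) (V : lmodType R[i]) (ip : V -> V -> R[i])
  (ax : inner_product_axioms ip) (x y : V) :
  `|complex.Re (ip x y)| <= hnorm ip x * hnorm ip y.
Proof.
have h := CS2 ax x y; rewrite -(hn_sq ax x) -(hn_sq ax y) in h.
have := hn_ge0 ip x; have := hn_ge0 ip y.
move: (complex.Re (ip x y)) (hnorm ip x) (hnorm ip y) h => r p q h q0 p0.
have P0 : 0 <= p * q by apply: mulr_ge0.
rewrite -exprMn in h; move: (p * q) P0 h => P P0 h.
rewrite ler_norml; apply/andP; split; nra.
Qed.

Lemma hn_tri (R : realType) (V : lmodType R[i]) (ip : V -> V -> R[i])
  (ax : inner_product_axioms ip) (x y : V) :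
  hnorm ip (x + y) <= hnorm ip x + hnorm ip y.
Proof.
have e : NN ip (x + y) = NN ip x + 2 * complex.Re (ip x y) + NN ip y.
  have -> : x + y = x + 1%:C *: y by rewrite (_ : 1%:C = 1) // scale1r.
  by rewrite (NN_exp ax) mulr1 expr1n mul1r.
have h := CSabs ax x y.
have := hn_sq ax (x + y); have := hn_sq ax x; have := hn_sq ax y.
have := hn_ge0 ip x; have := hn_ge0 ip y; have := hn_ge0 ip (x + y).
rewrite e; move: (complex.Re (ip x y)) (hnorm ip x) (hnorm ip y) (hnorm ip (x + y)) h
  (NN ip x) (NN ip y) => r p q s h a b s0 q0 p0 eb ea es.
have : r <= p * q by have := ler_norm r; lra.
move=> rle. nra.
Qed.

Lemma small0 (R : realType) (X C : R) : 0 <= C -> (forall e, 0 < e -> X <= e * C) -> X <= 0.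
Proof.
move=> C0 h; rewrite leNgt; apply/negP => X0.
have e0 : 0 < X / (C + 1) by apply: divr_gt0 => //; lra.
have := h _ e0.
have -> : X / (C + 1) * C = X - X / (C + 1).
  by field; apply/eqP => h1; lra.
move: e0; lra.
Qed.

Lemma ReN (R : realType) (c : R[i]) : complex.Re (- c) = - complex.Re c.
Proof. by case: c. Qed.

Lemma wlimRe (R : realType) (V : lmodType R[i]) (ip : V -> V -> R[i])
  (ax : inner_product_axioms ip) (u : nat -> V) (l z : V) :
  hconverges ip u l -> (forall n, ip (u n) z = 0) -> complex.Re (ip l z) = 0.
Proof.
move=> hc h0; apply/eqP; rewrite -normr_le0.
apply: (@small0 _ _ (hnorm ip z)); first exact: hn_ge0.
move=> e e0; have [N hN] := hc e e0; have hn := hN N (leqnn N).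
have -> : ip l z = - ip (u N - l) z by rewrite (ipB1 ax) h0 sub0r opprK.
rewrite ReN normrN; apply: le_trans (CSabs ax _ _) _.
by apply: ler_wpM2r; [exact: hn_ge0 | exact: ltW].
Qed.

Lemma cplx0 (R : realType) (c : R[i]) :
  complex.Re c = 0 -> complex.Re ((Complex 0 1)^*%C * c) = 0 -> c = 0.
Proof. case: c => a b /= -> h; congr Complex; move: h; lra. Qed.

Lemma wlim (R : realType) (V : lmodType R[i]) (ip : V -> V -> R[i])
  (ax : inner_product_axioms ip) (u : nat -> V) (l z : V) :
  hconverges ip u l -> (forall n, ip (u n) z = 0) -> ip l z = 0.
Proof.
move=> hc h0; apply: cplx0; first exact: (wlimRe ax hc).
rewrite -(ipZ2 ax); apply: (wlimRe ax hc) => n.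
by rewrite (ipZ2 ax) h0 mulr0.
Qed.

Lemma orth_cs (R : realType) (V : lmodType R[i]) (ip : V -> V -> R[i])
  (ax : inner_product_axioms ip) (W : set V) : closed_subspace ip (orthocompl ip W).
Proof.
split.
- by move=> y _; apply: ip0l.
- by move=> a x y hx hy z hz; rewrite (ipD1 ax) (ipZ1 ax) hx // hy // mulr0 addr0.
- move=> u l hu hc z hz; apply: (wlim ax hc) => n; exact: hu.
Qed.

Lemma dpos (R : realType) (n : nat) : 0 < (n.+1%:R : R)^-1.
Proof. by rewrite invr_gt0 ltr0Sn. Qed.

Lemma dmono (R : realType) (N n : nat) : (N <= n)%N -> (n.+1%:R : R)^-1 <= (N.+1%:R)^-1.
Proof. by move=> h; rewrite lef_pV2 ?posrE ?ltr0Sn // ler_nat ltnS. Qed.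

Lemma dle1 (R : realType) (n : nat) : (n.+1%:R : R)^-1 <= 1.
Proof. by have := @dmono R 0 n (leq0n n); rewrite invr1. Qed.

Lemma dsmall (R : realType) (e : R) : 0 < e -> exists N : nat, (N.+1%:R : R)^-1 < e.
Proof.
move=> e0; exists (Num.truncn e^-1).
by rewrite invf_plt ?posrE ?ltr0Sn // truncnS_gt.
Qed.

Lemma hn_lt (R : realType) (V : lmodType R[i]) (ip : V -> V -> R[i])
  (ax : inner_product_axioms ip) (x : V) (e : R) : 0 < e -> NN ip x < e ^+ 2 -> hnorm ip x < e.
Proof.
move=> e0; rewrite -(hn_sq ax); have := hn_ge0 ip x; move: (hnorm ip x) => h h0 hl.
nra.
Qed.

Lemma NN0 (R : realType) (V : lmodType R[i]) (ip : V -> V -> R[i])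
  (ax : inner_product_axioms ip) : NN ip 0 = 0.
Proof. by rewrite /NN (ip0l ax). Qed.

Lemma para (R : realType) (V : lmodType R[i]) (ip : V -> V -> R[i])
  (ax : inner_product_axioms ip) (a b : V) :
  NN ip (a + b) + NN ip (a - b) = 2 * NN ip a + 2 * NN ip b.
Proof.
have e1 : a + b = a + 1%:C *: b by rewrite (_ : 1%:C = 1) // scale1r.
have e2 : a - b = a + (-1)%:C *: b.
  rewrite (_ : (-1)%:C = -1) ?scaleN1r //.
  by apply/eqP; rewrite eq_complex /= oppr0 !eqxx.
rewrite e1 e2 !(NN_exp ax); ring.
Qed.

Lemma NN2 (R : realType) (V : lmodType R[i]) (ip : V -> V -> R[i])
  (ax : inner_product_axioms ip) (w : V) : NN ip (w + w) = 4 * NN ip w.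
Proof. have := para ax w w; rewrite subrr (NN0 ax) addr0 => ->; ring. Qed.

Lemma proj (R : realType) (V : lmodType R[i]) (ip : V -> V -> R[i])
  (ax : inner_product_axioms ip) (hc : hcomplete ip) (S : set V)
  (cs : closed_subspace ip S) (v : V) :
  exists2 p, S p & orthocompl ip S (v - p).
Proof.
case: cs => S0 Slin Scl.
have SN : forall y, S y -> S (- y).
  by move=> y hy; have := Slin (-1) y 0 hy S0; rewrite addr0 scaleN1r.
have SZ : forall (a : R[i]) y, S y -> S (a *: y).
  by move=> a y hy; have := Slin a y 0 hy S0; rewrite addr0.
pose E := [set r | exists2 s, S s & r = hnorm ip (v - s)].
have E0 : E !=set0 by exists (hnorm ip (v - 0)); exists 0.
have Elb : lbound E 0 by move=> r [s _ ->]; exact: hn_ge0.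
have Einf : has_inf E by split => //; exists 0.
set d := inf E.
have d0 : 0 <= d by exact: lb_le_inf.
have dle : forall s, S s -> d <= hnorm ip (v - s).
  by move=> s hs; apply: (ge_inf (proj2 Einf)); exists s.
have : forall n : nat, exists s, S s /\ hnorm ip (v - s) < d + (n.+1%:R)^-1.
  move=> n; have [r [s hs ->] hr] := inf_adherent (dpos R n) Einf.
  by exists s.
move=> /choice [sq hsq].
have Nb : forall n, NN ip (v - sq n) <= d ^+ 2 + (2 * d + 1) * (n.+1%:R)^-1.
  move=> n; have [_ hn] := hsq n; rewrite -(hn_sq ax).
  have := hn_ge0 ip (v - sq n); have := dpos R n; have := dle1 R n.
  move: (hnorm ip (v - sq n)) ((n.+1%:R : R)^-1) hn => h t hn t1 t0 h0.
  nra.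
have Cb : forall n m, NN ip (sq m - sq n) <=
    2 * (2 * d + 1) * ((n.+1%:R)^-1 + (m.+1%:R)^-1).
  move=> n m.
  pose c : R[i] := 2^-1.
  have cc : c + c = 1 by rewrite /c [in RHS](splitr 1) mul1r.
  have hs : S (c *: sq n + c *: sq m).
    by apply: Slin; [case: (hsq n) | apply: SZ; case: (hsq m)].
  have e : c *: ((v - sq n) + (v - sq m)) = v - (c *: sq n + c *: sq m).
    by rewrite scalerDr !scalerBr addrACA -opprD -scalerDl cc scale1r.
  have ew : c *: ((v - sq n) + (v - sq m)) + c *: ((v - sq n) + (v - sq m))
      = (v - sq n) + (v - sq m) by rewrite -scalerDl cc scale1r.
  have e2 : (v - sq n) - (v - sq m) = sq m - sq n.
    by rewrite opprB [LHS]addrC addrA subrK.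
  have := para ax (v - sq n) (v - sq m).
  rewrite -ew (NN2 ax) e e2.
  have := dle _ hs; rewrite -(hn_sq ax); have := hn_ge0 ip (v - (c *: sq n + c *: sq m)).
  have := Nb n; have := Nb m.
  move: (hnorm ip _) => h h0 hdh hg dh eq.
  have hd2 : d ^+ 2 <= h ^+ 2 by nra.
  have -> : 2 * (2 * d + 1) * ((n.+1%:R)^-1 + (m.+1%:R)^-1) =
    2 * ((2 * d + 1) / n.+1%:R) + 2 * ((2 * d + 1) / m.+1%:R) by ring.
  move: hdh h0 eq hd2.
  move: (NN ip (sq m - sq n)) (NN ip (v - sq n)) (NN ip (v - sq m)) (d ^+ 2) (h ^+ 2)
     ((2 * d + 1) / n.+1%:R) ((2 * d + 1) / m.+1%:R) => A B C D H P Q.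
  lra.
have hcau : hcauchy ip sq.
  move=> e e0.
  have k0 : 0 < 4 * (2 * d + 1) by lra.
  have [N hN] := dsmall (divr_gt0 (exprn_gt0 2 e0) k0).
  rewrite ltr_pdivlMr // in hN.
  exists N => m n hm hn.
  apply: (hn_lt ax) => //.
  apply: le_lt_trans (Cb n m) _.
  have := dmono R hm; have := dmono R hn.
  move: ((n.+1%:R : R)^-1) ((m.+1%:R : R)^-1) ((N.+1%:R : R)^-1) hN => a b t hN ha hb.
  nra.
have [l hl] := hc sq hcau.
have Sl : S l by apply: (Scl sq l) => // n; case: (hsq n).
have hvl : hnorm ip (v - l) <= d.
  apply/ler_addgt0Pr => e e0.
  have e2 : 0 < e / 2 by apply: divr_gt0.
  have [N1 hN1] := hl _ e2.
  have [N2 hN2] := dsmall e2.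
  pose n := maxn N1 N2.
  have h1 := hN1 n (leq_maxl _ _).
  have h2 := dmono R (leq_maxr N1 N2).
  have h3 := (hsq n).2.
  have -> : v - l = (v - sq n) + (sq n - l) by rewrite addrA subrK.
  apply: le_trans (hn_tri ax _ _) _.
  rewrite -/n in h2.
  move: (hnorm ip (v - sq n)) (hnorm ip (sq n - l)) ((n.+1%:R : R)^-1) ((N2.+1%:R : R)^-1)
    h1 h2 h3 hN2 => a b t t2 h1 h2 h3 hN2.
  lra.
have mn : forall s, S s -> NN ip (v - l) <= NN ip (v - s).
  move=> s hs; rewrite -!(hn_sq ax); have := dle s hs; have := hn_ge0 ip (v - l).
  move: (hnorm ip (v - l)) (hnorm ip (v - s)) hvl => a b hvl a0 db.
  nra.
have oRe : forall y, S y -> complex.Re (ip (v - l) y) = 0.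
  move=> y hy.
  have q : complex.Re (ip (v - l) y) ^+ 2 <= 0 * NN ip y.
    apply: quad; first exact: NN_ge0.
    move=> lam.
    have := mn (lam%:C *: (- y) + l) (Slin _ _ _ (SN y hy) Sl).
    rewrite (_ : v - (lam%:C *: - y + l) = (v - l) + lam%:C *: y); last first.
      by rewrite scalerN opprD opprK [RHS]addrAC addrA.
    rewrite (NN_exp ax); lra.
  rewrite mul0r in q.
  by apply/eqP; rewrite -sqrf_eq0 eq_le q sqr_ge0.
exists l => // y hy.
apply: cplx0; first exact: oRe.
rewrite -(ipZ2 ax); apply: oRe; exact: SZ.
Qed.

Lemma ii_neq0 (R : realType) : (Complex 0 1 : R[i]) != 0.
Proof. by apply/negP => /eqP [] /eqP; rewrite oner_eq0. Qed.

Theorem lemma4p2 (R : realType) (V : lmodType R[i]) (ip : V -> V -> R[i])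
  (T Ts : V -> V) :
  is_inf_sep_hilbert ip ->
  contraction ip T ->
  is_adjoint ip T Ts ->
  cnu ip T ->
  orth_dsum3 ip (sperp ip (A_T T Ts)) (A_T T Ts) (Q_ ip T Ts) (Qs_ ip T Ts).
Proof.
move=> [ax hc _ _] _ adj _.
have ax4 : forall x, ip x x = 0 -> x = 0 by case: ax.
have Tdef : forall x, defK T Ts x -> Ts (T x) = x.
  by move=> x hx; apply/esym/subr0_eq.
have Tsdef : forall p, defKs T Ts p -> T (Ts p) = p.
  by move=> p hp; apply/esym/subr0_eq.
have TK : forall k, defK T Ts k -> defKs T Ts (T k).
  by move=> k hk; rewrite /defKs /= Tdef // subrr.
pose W := [set y | exists z, y = z - T (Ts z)].
have idn : forall x z, ip (x - T (Ts x)) z = ip x (z - T (Ts z)).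
  move=> x z; rewrite (ipB1 ax) (ipB2 ax) adj; congr (_ - _).
  by rewrite (ipC ax (T (Ts z)) x) adj -(ipC ax).
have KsW : forall x, defKs T Ts x <-> orthocompl ip W x.
  move=> x; split.
  - move=> hx y [z ->]; rewrite -idn.
    by have -> : x - T (Ts x) = 0 := hx; rewrite (ip0l ax).
  - move=> h; apply: ax4; rewrite idn; apply: h.
    by exists (x - T (Ts x)).
split.
- apply/seteqP; split.
  + move=> [a1 a2] ha.
    have key : forall k, defK T Ts k -> ip a1 k = ip a2 (T k).
      move=> k hk; have := ha (k, T k) (ex_intro2 _ _ k hk erefl).
      rewrite /sform /= -mulrBr => /eqP; rewrite mulf_eq0 => /orP [i0|].
        by move: (ii_neq0 R); rewrite i0.
      by rewrite subr_eq0 => /eqP.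
    have [p hp hq] := proj ax hc (orth_cs ax W) a2.
    have hpK : defKs T Ts p by apply/KsW.
    have hq' : orthocompl ip (defKs T Ts) (a2 - p).
      by move=> y hy; apply: hq; apply/KsW.
    pose x := Ts p.
    have hTx : T x = p by rewrite /x Tsdef.
    have hx : defK T Ts x by rewrite /defK /= hTx subrr.
    exists (x, T x), (a1 - x, 0), (0, a2 - p); split.
    * by exists x.
    * exists (a1 - x) => //.
      move=> k hk; rewrite (ipB1 ax) key //.
      have -> : a2 = p + (a2 - p) by rewrite addrC subrK.
      rewrite (ipD1 ax) (hq' (T k) (TK k hk)) addr0 -[in ip p _]hTx.
      by rewrite adj Tdef // subrr.
    * by exists (a2 - p).
    * by rewrite /= hTx !addr0 addrC subrK [p + _]addrC subrK.
  + move=> _ [a [b [c [[x hx ->] [q hq ->] [r hr ->] ->]]]] /=.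
    move=> _ [k hk ->]; rewrite /sform /= !addr0 !(ipD1 ax) (hq k hk) (hr (T k) (TK k hk)) !addr0.
    by rewrite adj Tdef // subrr.
- move=> _ _ [x hx ->] [q hq ->]; rewrite /ip2 /= (ip0r ax) addr0.
  by rewrite (ipC ax q x) (hq x hx) conjc0.
- move=> _ _ [x hx ->] [r hr ->]; rewrite /ip2 /= (ip0r ax) add0r.
  by rewrite (ipC ax r (T x)) (hr (T x) (TK x hx)) conjc0.
- move=> _ _ [q hq ->] [r hr ->]; rewrite /ip2 /= (ip0r ax) (ip0l ax) addr0.
  done.
Qed.
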